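(* If $(V,\rho)$ is a purely irreducible $\mathfrak{sl}(2)$-module, then it is a Casimir module (i.e. $C_\rho=\mu\,\mathrm{Id}_V$ for some $\mu\in\mathbb{C}$) and $\mathrm{End}_{\mathfrak{sl}(2)}(V)=\mathbb{C}$.
   Context: $\mathfrak{sl}(2)$ has basis $L_{-1}=f$, $L_0=-\tfrac12 h$, $L_1=-e$ for a Chevalley basis $e,f,h$. An $\mathfrak{sl}(2)$-module $(V,\rho)$ is a $\mathbb{C}[z]$-module via $z\cdot v=\rho(L_0)v$; its Casimir operator is $C_\rho=\rho(L_0)(\rho(L_0)-1)-\rho(L_{-1})\rho(L_1)$. A finite rank torsion free module is one that is torsion free over $\mathbb{C}[z]$ with localization $S^{-1}V$ ($S=\mathbb{C}[z]\setminus\{0\}$) finite-dimensional over $\mathbb{C}(z)$. A submodule $V'$ is pure if $V/V'$ is torsion free. $(V,\rho)$ is purely irreducible if it is a nonzero finite rank torsion free $\mathfrak{sl}(2)$-module having no pure $\mathfrak{sl}(2)$-submodules other than $0$ and $V$ (equivalently, every proper nonzero $\mathfrak{sl}(2)$-submodule $V'$ has $V/V'$ torsion; equivalently, $S^{-1}V$ with its induced $\mathfrak{sl}(2)$-action has no nonzero proper $\mathfrak{sl}(2)$-submodule that is a $\mathbb{C}(z)$-subspace). *)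

(* Defs.v *)
From HB Require Import structures.
From mathcomp Require Import all_boot all_order all_algebra.
From mathcomp Require Import complex.
From mathcomp Require Import reals.
Set Implicit Arguments. Unset Strict Implicit. Unset Printing Implicit Defensive.
Import Order.TTheory GRing.Theory Num.Theory.
Local Open Scope ring_scope.

Section Sl2.
Variable C : fieldType.
Variable V : lmodType C.

(* An sl(2)-module structure on V, given by the images of a Chevalley basis
   e, f, h, satisfying [h,e]=2e, [h,f]=-2f, [e,f]=h. *)
Record sl2_module := Sl2Module {
  rho_e : {linear V -> V};
  rho_f : {linear V -> V};
  rho_h : {linear V -> V};
  sl2_he : forall v, rho_h (rho_e v) - rho_e (rho_h v) = 2%:R *: rho_e v;
  sl2_hf : forall v, rho_h (rho_f v) - rho_f (rho_h v) = - (2%:R *: rho_f v);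
  sl2_ef : forall v, rho_e (rho_f v) - rho_f (rho_e v) = rho_h v
}.

Variable rho : sl2_module.

Definition Lm1 (v : V) : V := rho_f rho v.
Definition L0 (v : V) : V := - (2%:R^-1 *: rho_h rho v).
Definition L1 (v : V) : V := - rho_e rho v.

(* C[z]-module structure: z . v = L0 v, so p . v = p(L0) v *)
Definition zact (p : {poly C}) (v : V) : V :=
  \sum_(i < size p) p`_i *: iter i L0 v.

Definition casimir (v : V) : V := L0 (L0 v) - L0 v - Lm1 (L1 v).

Definition torsion_free : Prop :=
  forall (p : {poly C}) (v : V), p != 0 -> v != 0 -> zact p v != 0.

(* S^{-1}V is finite-dimensional over C(z): finitely many vectors whose
   images span S^{-1}V over C(z), i.e. every v satisfies s.v = sum a_i.v_i
   for some nonzero s in C[z] and a_i in C[z]. *)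
Definition finite_rank : Prop :=
  exists (n : nat) (vs : 'I_n -> V), forall v : V,
    exists (s : {poly C}) (a : 'I_n -> {poly C}),
      s != 0 /\ zact s v = \sum_(i < n) zact (a i) (vs i).

Definition sl2_submodule (W : V -> Prop) : Prop :=
  [/\ W 0,
      (forall u w, W u -> W w -> W (u + w)),
      (forall (c : C) w, W w -> W (c *: w)) &
      (forall w, W w -> [/\ W (rho_e rho w), W (rho_f rho w) & W (rho_h rho w)])].

(* pure: V/W is torsion free over C[z] *)
Definition pure_submodule (W : V -> Prop) : Prop :=
  sl2_submodule W /\
  forall (p : {poly C}) (v : V), p != 0 -> W (zact p v) -> W v.

Definition purely_irreducible : Prop :=
  [/\ exists v : V, v != 0,
      torsion_free, finite_rank &
      forall W, pure_submodule W -> (forall v, W v -> v = 0) \/ (forall v, W v)].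

Definition casimir_module : Prop :=
  exists mu : C, forall v, casimir v = mu *: v.

Definition sl2_endomorphism (phi : {linear V -> V}) : Prop :=
  forall v, [/\ phi (rho_e rho v) = rho_e rho (phi v),
                phi (rho_f rho v) = rho_f rho (phi v) &
                phi (rho_h rho v) = rho_h rho (phi v)].

End Sl2.

(* Main.v *)
Require Import Defs.
From mathcomp Require Import all_boot all_order all_algebra.
From mathcomp Require Import complex reals.
From mathcomp Require Import zify ring.
From Stdlib Require Import Classical.
Set Implicit Arguments. Unset Strict Implicit. Unset Printing Implicit Defensive.
Import GRing.Theory Num.Theory.
Local Open Scope ring_scope.

Section PE.
Variable V : zmodType.
Variable S : comNzRingType.
Variable act : S -> V -> V.
Hypothesis actDl : forall a b v, act (a + b) v = act a v + act b v.
Hypothesis actDr : forall a u w, act a (u + w) = act a u + act a w.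
Hypothesis actM : forall a b v, act (a * b) v = act a (act b v).
Hypothesis act1 : forall v, act 1 v = v.
Variable A : V -> V.
Hypothesis AD : forall u w, A (u + w) = A u + A w.
Hypothesis Aact : forall a v, A (act a v) = act a (A v).

Lemma act0l v : act 0 v = 0.
Proof. by apply/(addrI (act 0 v)); rewrite -actDl !addr0. Qed.
Lemma act0r a : act a 0 = 0.
Proof. by apply/(addrI (act a 0)); rewrite -actDr !addr0. Qed.
Lemma actNl a v : act (- a) v = - act a v.
Proof. by apply/eqP; rewrite -subr_eq0 opprK -actDl addNr act0l. Qed.
Lemma actNr a v : act a (- v) = - act a v.
Proof. by apply/eqP; rewrite -subr_eq0 opprK -actDr addNr act0r. Qed.
Lemma actBl a b v : act (a - b) v = act a v - act b v.
Proof. by rewrite actDl actNl. Qed.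
Lemma actBr a u w : act a (u - w) = act a u - act a w.
Proof. by rewrite actDr actNr. Qed.
Lemma actsuml I (r : seq I) (P : pred I) (F : I -> S) v :
  act (\sum_(i <- r | P i) F i) v = \sum_(i <- r | P i) act (F i) v.
Proof.
elim/big_rec2: _ => [|i x y _ <-]; first by rewrite act0l.
by rewrite actDl.
Qed.
Lemma actsumr I (r : seq I) (P : pred I) (F : I -> V) a :
  act a (\sum_(i <- r | P i) F i) = \sum_(i <- r | P i) act a (F i).
Proof.
elim/big_rec2: _ => [|i x y _ <-]; first by rewrite act0r.
by rewrite actDr.
Qed.
Lemma A0 : A 0 = 0.
Proof. by apply/(addrI (A 0)); rewrite -AD !addr0. Qed.
Lemma AN v : A (- v) = - A v.
Proof. by apply/eqP; rewrite -subr_eq0 opprK -AD addNr A0. Qed.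
Lemma iterAD n u w : iter n A (u + w) = iter n A u + iter n A w.
Proof. by elim: n => //= n ->; rewrite AD. Qed.
Lemma iterA0 n : iter n A 0 = 0.
Proof. by elim: n => //= n ->; rewrite A0. Qed.
Lemma iterAact n a v : iter n A (act a v) = act a (iter n A v).
Proof. by elim: n => //= n ->; rewrite Aact. Qed.

Implicit Types (p q : {poly S}) (v u w : V).
Definition pe (p : {poly S}) (v : V) : V :=
  \sum_(i < size p) act p`_i (iter i A v).

Lemma pe_bound p v n : (size p <= n)%N ->
  pe p v = \sum_(i < n) act p`_i (iter i A v).
Proof.
move=> hn; rewrite /pe (big_ord_widen n (fun i => act p`_i (iter i A v))) //.
rewrite (big_mkcond (fun i : 'I_n => (i < size p)%N)) /=.
apply: eq_bigr => i _; case: ifPn => // hi.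
by rewrite nth_default ?act0l // leqNgt.
Qed.

Lemma peD p q v : pe (p + q) v = pe p v + pe q v.
Proof.
pose n := maxn (size p) (size q).
have hp : (size p <= n)%N by rewrite leq_maxl.
have hq : (size q <= n)%N by rewrite leq_maxr.
have hpq : (size (p + q)%R <= n)%N by rewrite (leq_trans (size_polyD _ _)) // geq_max hp hq.
rewrite (pe_bound v hp) (pe_bound v hq) (pe_bound v hpq) -big_split /=.
by apply: eq_bigr => i _; rewrite coefD actDl.
Qed.
Lemma pe0 v : pe 0 v = 0.
Proof. by rewrite /pe size_poly0 big_ord0. Qed.
Lemma peN p v : pe (- p) v = - pe p v.
Proof. by apply/eqP; rewrite -subr_eq0 opprK -peD addNr pe0. Qed.
Lemma peB p q v : pe (p - q) v = pe p v - pe q v.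
Proof. by rewrite peD peN. Qed.
Lemma pesum I (r : seq I) (P : pred I) (F : I -> {poly S}) v :
  pe (\sum_(i <- r | P i) F i) v = \sum_(i <- r | P i) pe (F i) v.
Proof.
elim/big_rec2: _ => [|i x y _ <-]; first by rewrite pe0.
by rewrite peD.
Qed.
Lemma peDr p u w : pe p (u + w) = pe p u + pe p w.
Proof.
rewrite /pe -big_split /=; apply: eq_bigr => i _.
by rewrite iterAD actDr.
Qed.
Lemma pe0r p : pe p 0 = 0.
Proof. by rewrite /pe big1 // => i _; rewrite iterA0 act0r. Qed.
Lemma peNr p v : pe p (- v) = - pe p v.
Proof. by apply/eqP; rewrite -subr_eq0 opprK -peDr addNr pe0r. Qed.
Lemma peBr p u w : pe p (u - w) = pe p u - pe p w.
Proof. by rewrite peDr peNr. Qed.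
Lemma pesumr p I (r : seq I) (P : pred I) (F : I -> V) :
  pe p (\sum_(i <- r | P i) F i) = \sum_(i <- r | P i) pe p (F i).
Proof.
elim/big_rec2: _ => [|i x y _ <-]; first by rewrite pe0r.
by rewrite peDr.
Qed.
Lemma peC c v : pe c%:P v = act c v.
Proof.
rewrite (@pe_bound _ _ 1) ?size_polyC ?leq_b1 //.
by rewrite big_ord1 coefC.
Qed.
Lemma peX v : pe 'X v = A v.
Proof.
rewrite (@pe_bound _ _ 2) ?size_polyX //.
by rewrite !big_ord_recl big_ord0 !coefX /= act0l act1 add0r addr0.
Qed.
Lemma peMX p v : pe (p * 'X) v = pe p (A v).
Proof.
rewrite (@pe_bound _ _ (size p).+1); last first.
  by rewrite (leq_trans (size_polyMleq _ _)) // size_polyX addn2.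
rewrite big_ord_recl coefMX /= act0l add0r /pe.
by apply: eq_bigr => i _; rewrite coefMX /= -iterSr.
Qed.
Lemma peMC p c v : pe (p * c%:P) v = pe p (act c v).
Proof.
rewrite (@pe_bound _ _ (size p)); last first.
  rewrite (leq_trans (size_polyMleq _ _)) //.
  by have := size_polyC_leq1 c; lia.
by apply: eq_bigr => i _; rewrite coefMC actM iterAact.
Qed.
Lemma pe_comm (B : V -> V) :
  (forall u w, B (u + w) = B u + B w) ->
  (forall a v, B (act a v) = act a (B v)) ->
  (forall v, B (A v) = A (B v)) ->
  forall p v, B (pe p v) = pe p (B v).
Proof.
move=> BD Bact BA p v.
have B0 : B 0 = 0 by apply/(addrI (B 0)); rewrite -BD !addr0.
rewrite /pe; elim/big_rec2: _ => [//|i x y _ <-].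
rewrite BD Bact; congr (act _ _ + _).
by elim: (nat_of_ord i) => //= n <-; rewrite BA.
Qed.
Lemma peM p q v : pe (p * q) v = pe p (pe q v).
Proof.
elim/poly_ind: q v => [|q c IH] v; first by rewrite mulr0 !pe0 pe0r.
rewrite mulrDr mulrA peD peMX IH peMC peD peDr peMX peC.
by [].
Qed.
End PE.

Section Alg.
Variables (K : fieldType) (V : lmodType K) (E F L : V -> V).
Hypotheses (ED : forall u w, E (u + w) = E u + E w) (EZ : forall a u, E (a *: u) = a *: E u).
Hypotheses (FD : forall u w, F (u + w) = F u + F w) (FZ : forall a u, F (a *: u) = a *: F u).
Hypotheses (LD : forall u w, L (u + w) = L u + L w) (LZ : forall a u, L (a *: u) = a *: L u).
Hypothesis EL : forall v, E (L v) = L (E v) + E v.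
Hypothesis FL : forall v, F (L v) = L (F v) - F v.
Hypothesis EF : forall v, E (F v) = F (E v) - 2%:R *: L v.

Let N (G : V -> V) (GZ : forall a u, G (a *: u) = a *: G u) u : G (- u) = - G u.
Proof. by rewrite -scaleN1r GZ scaleN1r. Qed.
Let B (G : V -> V) (GD : forall u w, G (u + w) = G u + G w)
  (GZ : forall a u, G (a *: u) = a *: G u) u w : G (u - w) = G u - G w.
Proof. by rewrite GD (N GZ). Qed.

Lemma LF v : L (F v) = F (L v) + F v.
Proof. by rewrite FL subrK. Qed.
Lemma LE v : L (E v) = E (L v) - E v.
Proof. by rewrite EL addrK. Qed.

Definition Om x := L (L x) - L x + F (E x).

Lemma OmD u w : Om (u + w) = Om u + Om w.
Proof.
rewrite /Om !LD ED FD opprD (addrACA (L (L u))).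
by rewrite (addrACA (L (L u) - L u)).
Qed.
Lemma OmZ a u : Om (a *: u) = a *: Om u.
Proof. by rewrite /Om !LZ EZ FZ !scalerDr scalerN. Qed.
Lemma OmL x : Om (L x) = L (Om x).
Proof.
by rewrite /Om EL FD FL subrK LD (B LD LZ).
Qed.
Lemma OmF x : Om (F x) = F (Om x).
Proof.
rewrite /Om EF (B FD FZ) FZ !(LF, LD) addrK FD (B FD FZ).
rewrite scaler_nat mulr2n opprD !addrA [RHS]addrAC.
by rewrite (addrAC (F (L (L x))) (F (L x)) (F (F (E x)))) addrK.
Qed.
Lemma OmEc x : Om (E x) = E (Om x).
Proof.
rewrite /Om ED (B ED EZ) EF !EL LD addrK; symmetry.
rewrite scaler_nat mulr2n opprD !addrA [RHS]addrAC.
by rewrite (addrAC (L (L (E x))) (L (E x)) (F (E (E x)))) addrK.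
Qed.
End Alg.

Section P.
Variable C : numClosedFieldType.
Implicit Types p q : {poly C}.

Lemma size_shift_sub p : (size (p \Po ('X - 1%:P) - p)%R <= (size p).-1)%N.
Proof.
case: (eqVneq p 0) => [->|p0]; first by rewrite comp_poly0 subr0 size_poly0.
have sX : size ('X - 1%:P : {poly C}) = 2 := size_XsubC 1.
have szc : size (p \Po ('X - 1%:P)) = size p := size_comp_poly2 p sX.
have lc : lead_coef (p \Po ('X - 1%:P)) = lead_coef p.
  by rewrite lead_coef_comp ?sX // lead_coefXsubC expr1n mulr1.
have sp : (0 < size p)%N by rewrite size_poly_gt0.
apply/leq_sizeP => j hj; rewrite coefB.
case: (ltnP j (size p)) => hj2.
  have -> : j = (size p).-1 by lia.
  by rewrite -{1}szc -!lead_coefE lc subrr.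
by rewrite !nth_default ?szc // subrr.
Qed.

Lemma const_shift p : p \Po ('X - 1%:P) = p -> (size p <= 1)%N.
Proof.
move=> hp; set q := p - (p.[0])%:P.
have hev : forall x, p.[x - 1] = p.[x].
  by move=> x; rewrite -{2}hp horner_comp hornerXsubC.
have hq : forall k, q.[- k%:R] = 0.
  elim => [|k IH]; first by rewrite /q !hornerE oppr0 subrr.
  move: IH; rewrite /q !hornerE -addn1 natrD opprD hev => ->.
  by [].
case: (eqVneq q 0) => [q0|qn0].
  have -> : p = (p.[0])%:P by apply/eqP; rewrite -subr_eq0 -/q q0.
  exact: size_polyC_leq1.
set rs := [seq - (k%:R : C) | k <- iota 0 (size q)].
have H1 : all (root q) rs.
  by apply/allP => x /mapP [k _ ->]; rewrite /root hq.
have H2 : uniq rs.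
  rewrite map_inj_uniq ?iota_uniq // => a b /oppr_inj /eqP.
  by rewrite eqr_nat => /eqP.
have := max_poly_roots qn0 H1 H2.
by rewrite size_map size_iota ltnn.
Qed.
End P.

Section S.
Variable C : numClosedFieldType.
Variable V : lmodType C.
Variable rho : sl2_module V.
Local Notation e := (rho_e rho).
Local Notation f := (rho_f rho).
Local Notation h := (rho_h rho).
Local Notation L0 := (L0 rho).
Local Notation zact := (zact rho).
Local Notation sc := (fun (a : C) (v : V) => a *: v).
Implicit Types (p q : {poly C}) (u v w : V) (a b c : C).

Lemma two_neq0 : (2%:R : C) != 0.
Proof. by rewrite pnatr_eq0. Qed.

Lemma L0D u w : L0 (u + w) = L0 u + L0 w.
Proof. by rewrite /Defs.L0 linearD scalerDr opprD. Qed.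
Lemma L0Z a v : L0 (a *: v) = a *: L0 v.
Proof.
have hz : h (a *: v) = a *: h v by rewrite linearZ.
by rewrite /Defs.L0 hz scalerN scalerA mulrC -scalerA. Qed.
Lemma hL0 v : h v = - (2%:R *: L0 v).
Proof. by rewrite /Defs.L0 scalerN opprK scalerA mulfV ?two_neq0 // scale1r. Qed.

Lemma zactE p v : zact p v = pe sc L0 p v.
Proof. by []. Qed.

Let s_Dl a b v : (a + b) *: v = a *: v + b *: v. Proof. exact: scalerDl. Qed.
Let s_Dr a u w : a *: (u + w) = a *: u + a *: w. Proof. exact: scalerDr. Qed.
Let s_M a b v : (a * b) *: v = a *: (b *: v). Proof. by rewrite scalerA. Qed.
Let s_1 v : 1 *: v = v. Proof. exact: scale1r. Qed.

Lemma zactD p q v : zact (p + q) v = zact p v + zact q v.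
Proof. exact: (peD s_Dl). Qed.
Lemma zactB p q v : zact (p - q) v = zact p v - zact q v.
Proof. exact: (peB s_Dl). Qed.
Lemma zactDr p u w : zact p (u + w) = zact p u + zact p w.
Proof. exact: (peDr s_Dr L0D). Qed.
Lemma zactBr p u w : zact p (u - w) = zact p u - zact p w.
Proof. exact: (peBr s_Dr L0D). Qed.
Lemma zact0r p : zact p 0 = 0.
Proof. exact: (pe0r s_Dr L0D). Qed.
Lemma zact0 v : zact 0 v = 0.
Proof. exact: pe0. Qed.
Lemma zactC c v : zact c%:P v = c *: v.
Proof. exact: (peC s_Dl). Qed.
Lemma zactX v : zact 'X v = L0 v.
Proof. exact: (peX s_Dl s_1). Qed.
Lemma zactM p q v : zact (p * q) v = zact p (zact q v).
Proof. exact: (peM s_Dl s_Dr s_M L0D L0Z). Qed.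
Lemma zactsum I (r : seq I) (P : pred I) (F : I -> {poly C}) v :
  zact (\sum_(i <- r | P i) F i) v = \sum_(i <- r | P i) zact (F i) v.
Proof. exact: (pesum s_Dl). Qed.
Lemma zactsumr p I (r : seq I) (P : pred I) (F : I -> V) :
  zact p (\sum_(i <- r | P i) F i) = \sum_(i <- r | P i) zact p (F i).
Proof. exact: (pesumr s_Dr L0D). Qed.
Lemma zact_comm (B : V -> V) :
  (forall u w, B (u + w) = B u + B w) ->
  (forall a v, B (a *: v) = a *: (B v)) ->
  (forall v, B (L0 v) = L0 (B v)) ->
  forall p v, B (zact p v) = zact p (B v).
Proof. move=> BD BZ BL p v; exact: (pe_comm BD BZ BL). Qed.
Lemma zactZr p a v : zact p (a *: v) = a *: zact p v.
Proof.
symmetry; apply: (zact_comm (B := fun v => a *: v)).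
- by move=> u w /=; rewrite scalerDr.
- by move=> b u /=; rewrite !scalerA mulrC.
- by move=> u /=; rewrite L0Z.
Qed.
Lemma zactZ p a v : zact (a *: p) v = a *: zact p v.
Proof. by rewrite -mul_polyC zactM zactC. Qed.
Lemma zactA p q v : zact p (zact q v) = zact q (zact p v).
Proof. by rewrite -!zactM mulrC. Qed.
Lemma zact1 v : zact 1 v = v.
Proof. by rewrite -[1]/(1%:P) zactC scale1r. Qed.
Lemma zactN p v : zact (- p) v = - zact p v.
Proof. by rewrite -sub0r zactB zact0 sub0r. Qed.
Lemma zactNr p v : zact p (- v) = - zact p v.
Proof. by rewrite -sub0r zactBr zact0r sub0r. Qed.

End S.

Section S.
Variable C : numClosedFieldType.
Variable V : lmodType C.
Variable rho : sl2_module V.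
Local Notation e := (rho_e rho).
Local Notation f := (rho_f rho).
Local Notation h := (rho_h rho).
Local Notation L0 := (L0 rho).
Local Notation zact := (zact rho).
Implicit Types (p q : {poly C}) (u v w x : V) (a b c : C).

Lemma linD (F : {linear V -> V}) u w : F (u + w) = F u + F w.
Proof. exact: linearD. Qed.
Lemma linZ (F : {linear V -> V}) a u : F (a *: u) = a *: F u.
Proof. by rewrite linearZ. Qed.
Lemma linN (F : {linear V -> V}) u : F (- u) = - F u.
Proof. exact: linearN. Qed.
Lemma linB (F : {linear V -> V}) u w : F (u - w) = F u - F w.
Proof. exact: linearB. Qed.
Lemma lin0 (F : {linear V -> V}) : F 0 = 0.
Proof. exact: linear0. Qed.

Lemma L00 : L0 0 = 0.
Proof. by rewrite /Defs.L0 (lin0 h) scaler0 oppr0. Qed.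
Lemma L0N u : L0 (- u) = - L0 u.
Proof. by rewrite -scaleN1r L0Z scaleN1r. Qed.
Lemma L0B u w : L0 (u - w) = L0 u - L0 w.
Proof. by rewrite L0D L0N. Qed.

Lemma eL0 v : e (L0 v) = L0 (e v) + e v.
Proof.
have := sl2_he rho v; rewrite (hL0 rho (e v)) (hL0 rho v) (linN e) (linZ e).
rewrite opprK addrC -scalerBr => /(scalerI (two_neq0 C)) /eqP.
by rewrite subr_eq addrC => /eqP.
Qed.

Lemma fL0 v : f (L0 v) = L0 (f v) - f v.
Proof.
have := sl2_hf rho v; rewrite (hL0 rho (f v)) (hL0 rho v) (linN f) (linZ f).
rewrite opprK addrC -scalerBr -scalerN => /(scalerI (two_neq0 C)) /eqP.
by rewrite subr_eq addrC => /eqP.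
Qed.

Lemma L0f v : L0 (f v) = f (L0 v) + f v.
Proof. by rewrite fL0 subrK. Qed.
Lemma L0e v : L0 (e v) = e (L0 v) - e v.
Proof. by rewrite eL0 addrK. Qed.

Lemma efv v : e (f v) = f (e v) - 2%:R *: L0 v.
Proof. by have := sl2_ef rho v; rewrite hL0 => /eqP; rewrite subr_eq addrC => /eqP. Qed.

Lemma shift_zact (B : V -> V) c :
  (forall u w, B (u + w) = B u + B w) ->
  (forall a v, B (a *: v) = a *: B v) ->
  (forall v, B (L0 v) = L0 (B v) + c *: B v) ->
  forall p v, B (zact p v) = zact (p \Po ('X + c%:P)) (B v).
Proof.
move=> BD BZ BL p v.
have B0 : B 0 = 0 by apply/(addrI (B 0)); rewrite -BD !addr0.
elim/poly_ind: p v => [|p c0 IH] v; first by rewrite comp_poly0 !zact0 B0.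
rewrite zactD zactM zactX zactC BD BZ IH BL.
rewrite comp_polyD comp_polyM comp_polyX comp_polyC zactD zactM zactC.
by rewrite zactD zactX zactC.
Qed.

Lemma e_zact p v : e (zact p v) = zact (p \Po ('X + 1%:P)) (e v).
Proof.
apply: shift_zact => [u w|a u|u]; first exact: linearD.
  exact: linearZ.
by rewrite eL0 scale1r.
Qed.

Lemma f_zact p v : f (zact p v) = zact (p \Po ('X + (-1)%:P)) (f v).
Proof.
apply: shift_zact => [u w|a u|u]; first exact: linearD.
  exact: linearZ.
by rewrite fL0 scaleN1r.
Qed.

Lemma h_zact p v : h (zact p v) = zact p (h v).
Proof.
apply: zact_comm => [u w|a u|u]; first exact: linearD.
  exact: linearZ.
by rewrite /Defs.L0 (linN h) (linZ h).
Qed.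


Lemma casE x : casimir rho x = Om e f L0 x.
Proof. by rewrite /casimir /Lm1 /L1 (linN f) (opprK (f (e x))). Qed.

End S.

Section S.
Variable C : numClosedFieldType.
Variable V : lmodType C.
Variable rho : sl2_module V.
Local Notation zact := (zact rho).

Lemma dep_gen m : forall k (w : 'I_k -> V) (us : 'I_m -> V)
    (s : 'I_k -> {poly C}) (A : 'I_k -> 'I_m -> {poly C}),
  (m < k)%N -> (forall j, s j != 0) ->
  (forall j, zact (s j) (w j) = \sum_(i < m) zact (A j i) (us i)) ->
  exists a : 'I_k -> {poly C}, (exists j, a j != 0) /\
    \sum_(j < k) zact (a j) (w j) = 0.
Proof.
elim: m => [|m IH] k w us s A hk hs hw.
  case: k hk w s A hs hw => // k _ w s A hs hw.
  exists (fun j => if j == ord0 then s ord0 else 0); split.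
    by exists ord0; rewrite eqxx.
  rewrite big_ord_recl eqxx big1 ?addr0 => [|j _]; last first.
    by rewrite eq_sym (negbTE (neq_lift _ _)) zact0.
  by rewrite hw big_ord0.
case: (boolP [forall j, A j ord_max == 0]) => [/forallP hA | /forallPn [j0 hj0]].
  apply: (IH k w (fun i => us (widen_ord (leqnSn m) i)) s
            (fun j i => A j (widen_ord (leqnSn m) i))) => //; first exact: ltnW.
  by move=> j; rewrite hw big_ord_recr /= (eqP (hA j)) zact0 addr0.
case: k hk w s A hs hw j0 hj0 => [//|k] hk w s A hs hw j0 hj0.
set c0 := A j0 ord_max.
pose w' := fun j : 'I_k => zact (c0 * s (lift j0 j)) (w (lift j0 j))
   - zact (A (lift j0 j) ord_max * s j0) (w j0).
have [|j|j|a' [[j1 hj1] hsum]] := IH k w' (fun i => us (widen_ord (leqnSn m) i)) (fun _ => 1)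
  (fun j i => c0 * A (lift j0 j) (widen_ord (leqnSn m) i)
              - A (lift j0 j) ord_max * A j0 (widen_ord (leqnSn m) i)).
- by [].
- exact: oner_neq0.
- rewrite zact1 /w' !zactM !hw !zactsumr -sumrB big_ord_recr /=.
  rewrite -!zactM -zactB [c0 * _]mulrC subrr zact0 addr0.
  by apply: eq_bigr => i _; rewrite -!zactM zactB.
pose a := fun j => match unlift j0 j with
                 | Some j' => a' j' * c0 * s j
                 | None => - \sum_(j' < k) a' j' * A (lift j0 j') ord_max * s j0 end.
have Hl : forall j, a (lift j0 j) = a' j * c0 * s (lift j0 j).
  by move=> j; rewrite /a liftK.
have H0 : a j0 = - \sum_(j' < k) a' j' * A (lift j0 j') ord_max * s j0.
  by rewrite /a unlift_none.
exists a; split.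
  by exists (lift j0 j1); rewrite Hl !mulf_neq0.
rewrite (bigD1_ord j0) //= H0.
under eq_bigr => j _ do rewrite Hl.
have hs2 : \sum_(j < k) zact (a' j * c0 * s (lift j0 j)) (w (lift j0 j))
   - \sum_(j < k) zact (a' j * A (lift j0 j) ord_max * s j0) (w j0) = 0.
  rewrite -sumrB; apply: (etrans _ hsum); apply: eq_bigr => j _.
  by rewrite /w' zactBr -!zactM !mulrA.
by rewrite zactN zactsum addrC.
Qed.

Lemma dep n (vs : 'I_n -> V)
  (HR : forall v, exists (s : {poly C}) (a : 'I_n -> {poly C}),
      s != 0 /\ zact s v = \sum_(i < n) zact (a i) (vs i))
  (w : 'I_n.+1 -> V) :
  exists a : 'I_n.+1 -> {poly C}, (exists j, a j != 0) /\
    \sum_(j < n.+1) zact (a j) (w j) = 0.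
Proof.
have : forall j, exists sa : {poly C} * ('I_n -> {poly C}),
    sa.1 != 0 /\ zact sa.1 (w j) = \sum_(i < n) zact (sa.2 i) (vs i).
  by move=> j; have [s [a [hs ha]]] := HR (w j); exists (s, a).
case/fin_all_exists => sa hsa.
apply: (@dep_gen n n.+1 w vs (fun j => (sa j).1) (fun j => (sa j).2)) => //.
- by move=> j; case: (hsa j).
- by move=> j; case: (hsa j).
Qed.

End S.

Section Main.
Variable C : numClosedFieldType.
Variable V : lmodType C.
Variable rho : sl2_module V.
Local Notation e := (rho_e rho).
Local Notation f := (rho_f rho).
Local Notation h := (rho_h rho).
Local Notation L0 := (L0 rho).
Local Notation zact := (zact rho).
Local Notation sc := (fun (a : C) (v : V) => a *: v).
Implicit Types (p q : {poly C}) (u v w x : V) (a b c : C) (P : {poly {poly C}}).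

Lemma tf0 : torsion_free rho -> forall p v, p != 0 -> zact p v = 0 -> v = 0.
Proof.
move=> tf p v hp hz; apply/eqP; apply/negPn/negP => hv.
by have := tf p v hp hv; rewrite hz eqxx.
Qed.

Variable phi : V -> V.
Hypothesis phiD : forall u w, phi (u + w) = phi u + phi w.
Hypothesis phiZ : forall a u, phi (a *: u) = a *: phi u.
Hypothesis phie : forall v, phi (e v) = e (phi v).
Hypothesis phif : forall v, phi (f v) = f (phi v).
Hypothesis phih : forall v, phi (h v) = h (phi v).
Hypothesis PI : purely_irreducible rho.
Hypothesis einj : forall v, e v = 0 -> v = 0.

Lemma phiN u : phi (- u) = - phi u.
Proof. by rewrite -scaleN1r phiZ scaleN1r. Qed.
Lemma phi0 : phi 0 = 0.
Proof. by apply/(addrI (phi 0)); rewrite -phiD !addr0. Qed.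
Lemma phiL v : phi (L0 v) = L0 (phi v).
Proof. by rewrite /Defs.L0 phiN phiZ phih. Qed.
Lemma phi_zact p v : phi (zact p v) = zact p (phi v).
Proof. exact: (zact_comm phiD phiZ phiL). Qed.

Local Notation ev := (pe zact phi).
Let zDl := zactD rho.
Let zDr := zactDr rho.
Let zM := zactM rho.

Lemma evD P Q v : ev (P + Q) v = ev P v + ev Q v.
Proof. exact: (peD zDl). Qed.
Lemma evB P Q v : ev (P - Q) v = ev P v - ev Q v.
Proof. exact: (peB zDl). Qed.
Lemma ev0r P : ev P 0 = 0.
Proof. exact: (pe0r zDr phiD). Qed.
Lemma evsumr P I (r : seq I) (Pr : pred I) (F : I -> V) :
  ev P (\sum_(i <- r | Pr i) F i) = \sum_(i <- r | Pr i) ev P (F i).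
Proof. exact: (pesumr zDr phiD). Qed.
Lemma evM P Q v : ev (P * Q) v = ev P (ev Q v).
Proof. exact: (peM zDl zDr zM phiD phi_zact). Qed.
Lemma ev_zact P s v : ev P (zact s v) = zact s (ev P v).
Proof.
symmetry; apply: (pe_comm (zactDr rho s)) => [p u|u].
  exact: zactA.
by rewrite phi_zact.
Qed.

Lemma ann : exists P, P != 0 /\ forall v, ev P v = 0.
Proof.
have [_ tf [n [vs HR]] _] := PI.
have : forall i : 'I_n, exists a : 'I_n.+1 -> {poly C},
   (exists j, a j != 0) /\ \sum_(j < n.+1) zact (a j) (iter j phi (vs i)) = 0.
  by move=> i; apply: (dep HR).
case/fin_all_exists => a ha.
pose Pi i := \poly_(j < n.+1) a i (inord j).
have hPi : forall i, Pi i != 0 /\ ev (Pi i) (vs i) = 0.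
  move=> i; have [[j1 hj1] hs] := ha i; split.
    apply/eqP => h0; move/eqP: hj1; apply.
    by have := coef_poly n.+1 (fun j => a i (inord j)) j1; rewrite -/(Pi i) h0 coef0 ltn_ord inord_val.
  rewrite (pe_bound zDl phi (vs i) (size_poly n.+1 _)) -[RHS]hs.
  by apply: eq_bigr => j _; rewrite coef_poly ltn_ord inord_val.
exists (\prod_(i < n) Pi i); split.
  by apply/prodf_neq0 => i _; case: (hPi i).
have hvs : forall i, ev (\prod_(i < n) Pi i) (vs i) = 0.
  move=> i; rewrite (bigD1 i) //= mulrC evM.
  by case: (hPi i) => _ ->; rewrite ev0r.
move=> v; have [s [b [hs hv]]] := HR v.
apply: (tf0 tf hs); rewrite -ev_zact hv evsumr big1 // => i _.
by rewrite ev_zact hvs zact0r.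
Qed.


Let s_Dl a b v : (a + b) *: v = a *: v + b *: v. Proof. exact: scalerDl. Qed.
Let s_Dr a u w : a *: (u + w) = a *: u + a *: w. Proof. exact: scalerDr. Qed.
Let s_M a b v : (a * b) *: v = a *: (b *: v). Proof. by rewrite scalerA. Qed.
Let s_1 v : 1 *: v = v. Proof. exact: scale1r. Qed.

Lemma ev_bound P n v : (size P <= n)%N ->
  ev P v = \sum_(i < n) zact P`_i (iter i phi v).
Proof. exact: (pe_bound zDl phi v). Qed.

Lemma linsum (F : {linear V -> V}) n (G : 'I_n -> V) :
  F (\sum_(i < n) G i) = \sum_(i < n) F (G i).
Proof.
elim/big_rec2: _ => [|i x y _ <-]; first exact: lin0.
exact: linD.
Qed.

Lemma iter_e n v : iter n phi (e v) = e (iter n phi v).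
Proof. by elim: n => //= n ->; rewrite phie. Qed.

Definition shP (P : {poly {poly C}}) := \poly_(i < size P) (P`_i \Po ('X - 1%:P)).
Definition DP (P : {poly {poly C}}) :=
  \poly_(i < size P) (P`_i \Po ('X - 1%:P) - P`_i).

Lemma compXm1Xp1 : ('X - 1%:P : {poly C}) \Po ('X + 1%:P) = 'X.
Proof. by rewrite comp_polyB comp_polyX comp_polyC addrK. Qed.

Lemma shP_ann P : (forall v, ev P v = 0) -> forall v, ev (shP P) v = 0.
Proof.
move=> hP v; apply: einj.
rewrite (ev_bound v (size_poly _ _)) linsum.
under eq_bigr => i _ do rewrite coef_poly ltn_ord e_zact -comp_polyA compXm1Xp1 comp_polyXr -iter_e.
by rewrite -(ev_bound (e v) (leqnn _)) hP.
Qed.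

Lemma evDP P v : ev (DP P) v = ev (shP P) v - ev P v.
Proof.
rewrite !(ev_bound v (size_poly _ _)) (ev_bound v (leqnn (size P))) -sumrB.
by apply: eq_bigr => i _; rewrite !coef_poly ltn_ord zactB.
Qed.

Lemma base P : P != 0 -> (forall v, ev P v = 0) ->
  (forall i, (size (P`_i)%R <= 1)%N) ->
  exists Q : {poly C}, Q != 0 /\ forall v, pe sc phi Q v = 0.
Proof.
move=> P0 hP hs.
exists (\poly_(i < size P) (P`_i)`_0); split.
  apply/eqP => Q0.
  have hl : lead_coef P = ((lead_coef P)`_0)%:P := size1_polyC (hs _).
  have h0 : (lead_coef P)`_0 = 0.
    have := coef_poly (size P) (fun i => (P`_i)`_0) (size P).-1.
    rewrite Q0 coef0 -lead_coefE ltn_predL size_poly_gt0 P0.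
    by move=> <-.
  by move/negP: P0; apply; rewrite -lead_coef_eq0 hl h0.
move=> v; rewrite (pe_bound s_Dl phi v (size_poly _ _)) -[RHS](hP v) (ev_bound v (leqnn _)).
by apply: eq_bigr => i _; rewrite coef_poly ltn_ord {2}(size1_polyC (hs i)) zactC.
Qed.

Lemma Delta d : forall P, P != 0 -> (forall v, ev P v = 0) ->
  (forall i, (size (P`_i)%R <= d.+1)%N) ->
  exists Q : {poly C}, Q != 0 /\ forall v, pe sc phi Q v = 0.
Proof.
elim: d => [|d IH] P P0 hP hs.
exact: (base P0 hP hs).
case: (eqVneq (DP P) 0) => hD.
  apply: (base P0 hP) => i; apply: const_shift.
  case: (ltnP i (size P)) => hi; last by rewrite nth_default // comp_poly0.
  have := coef_poly (size P) (fun i => P`_i \Po ('X - 1%:P) - P`_i) i.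
  rewrite -/(DP P) hD coef0 hi => /esym/eqP; rewrite subr_eq0.
  by move/eqP.
apply: (IH (DP P)) => // [v|i]; first by rewrite evDP shP_ann // hP subr0.
rewrite coef_poly; case: ifP => _; last by rewrite size_poly0.
have := hs i; have := size_shift_sub P`_i.
move=> h1 h2; apply: (leq_trans h1); move: h2; case: (size P`_i) => //.
Qed.

Lemma factor n : forall Q : {poly C}, (size Q <= n)%N -> Q != 0 ->
  (forall v, pe sc phi Q v = 0) -> exists l u, u != 0 /\ phi u = l *: u.
Proof.
have [[v0 hv0] _ _ _] := PI.
elim: n => [|n IH] Q hQ Q0 hann.
  by move: hQ; rewrite leqn0 size_poly_eq0 (negbTE Q0).
case: (eqVneq (size Q) 1%N) => hs.
  exfalso; have eQ := size1_polyC (eq_leq hs).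
  have := hann v0; rewrite eQ (peC s_Dl) => /eqP; rewrite scaler_eq0 (negbTE hv0) orbF.
  by move/eqP => c0; move/eqP: Q0; apply; rewrite eQ c0.
have [l hl] := closed_rootP Q hs.
case/factor_theorem: hl => Q' eQ.
case: (classic (exists u, u != 0 /\ phi u = l *: u)) => [[u hu]|hno]; first by exists l, u.
have Q'0 : Q' != 0 by apply/eqP => h0; move/eqP: Q0; apply; rewrite eQ h0 mul0r.
apply: (IH Q') => //.
  move: hQ; rewrite eQ size_Mmonic ?monicXsubC // size_XsubC addn2 /=.
  by [].
move=> v; apply/eqP; apply/negPn/negP => hw; apply: hno.
exists (pe sc phi Q' v); split => //.
apply/eqP; rewrite -subr_eq0; apply/eqP.
have := hann v; rewrite eQ mulrC (peM s_Dl s_Dr s_M phiD phiZ).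
by rewrite (peB s_Dl) (peX s_Dl s_1) (peC s_Dl).
Qed.

Theorem scalar_main : exists c, forall v, phi v = c *: v.
Proof.
have [P [P0 hP]] := ann.
have hsz : forall i, (size (P`_i)%R <= (\max_(i < size P) size (P`_i)%R).+1)%N.
  move=> i; case: (ltnP i (size P)) => hi; last by rewrite nth_default ?size_poly0.
  apply: leqW; exact: (@leq_bigmax_cond _ _ (fun j : 'I_(size P) => size (P`_j)%R) (Ordinal hi)).
have [Q [Q0 hQ]] := Delta P0 hP hsz.
have [l [u [u0 hu]]] := factor (leqnn _) Q0 hQ.
exists l.
have [_ tf _ pure] := PI.
pose W := fun v => phi v = l *: v.
have pW : pure_submodule rho W.
  split; first split.
  - by rewrite /W phi0 scaler0.
  - by move=> x y; rewrite /W phiD scalerDr => -> ->.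
  - by move=> a x; rewrite /W phiZ scalerA mulrC -scalerA => ->.
  - move=> x; rewrite /W => hx; split.
    + by rewrite phie hx linZ.
    + by rewrite phif hx linZ.
    + by rewrite phih hx linZ.
  move=> p x hp; rewrite /W phi_zact -zactZr => hx.
  apply/eqP; rewrite -subr_eq0; apply/eqP; apply: (tf0 tf hp).
  by rewrite zactBr hx subrr.
case: (pure W pW) => [H|H]; last exact: H.
by move/eqP: u0; case; apply: H.
Qed.

End Main.

Section E.
Variable C : numClosedFieldType.
Variable V : lmodType C.
Variable rho : sl2_module V.
Local Notation e := (rho_e rho).
Local Notation f := (rho_f rho).
Local Notation h := (rho_h rho).
Local Notation L0 := (L0 rho).
Local Notation zact := (zact rho).
Implicit Types (p q : {poly C}) (u v w x : V) (a b c : C).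

Lemma eig_indep (Om : V -> V) :
  (forall u w, Om (u + w) = Om u + Om w) ->
  (forall p v, Om (zact p v) = zact p (Om v)) ->
  torsion_free rho ->
  forall k (a c : 'I_k -> {poly C}) (u : 'I_k -> V), injective c ->
  (forall j, Om (u j) = zact (c j) (u j)) ->
  \sum_(j < k) zact (a j) (u j) = 0 -> forall j, zact (a j) (u j) = 0.
Proof.
move=> OmD Omz tf.
have Om0 : Om 0 = 0 by apply/(addrI (Om 0)); rewrite -OmD !addr0.
have OmN : forall v, Om (- v) = - Om v.
  by move=> v; apply/(addrI (Om v)); rewrite -OmD !subrr.
have Omsum : forall k (F : 'I_k -> V), Om (\sum_(j < k) F j) = \sum_(j < k) Om (F j).
  by move=> k F; elim/big_rec2: _ => [|i x y _ <-] //; rewrite OmD.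
elim => [|k IH] a c u ci hu hs j; first by case: j.
have lw : forall j', lift ord_max j' = widen_ord (leqnSn k) j'.
  by move=> j'; apply: val_inj; rewrite /= /bump leqNgt ltn_ord.
set l := (@ord_max k).
have H1 : \sum_(j < k) zact (a (widen_ord (leqnSn k) j) *
    (c (widen_ord (leqnSn k) j) - c l)) (u (widen_ord (leqnSn k) j)) = 0.
  have : Om (\sum_(j < k.+1) zact (a j) (u j)) - zact (c l) (\sum_(j < k.+1) zact (a j) (u j)) = 0.
    by rewrite hs Om0 zact0r subrr.
  rewrite Omsum zactsumr -sumrB big_ord_recr /=.
  rewrite Omz hu zactA subrr addr0 => HH; rewrite -[RHS]HH.
  by apply: eq_bigr => i _; rewrite Omz hu zactM zactB zactBr; congr (_ - _); exact: zactA.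
have H2 : forall j', zact (a (widen_ord (leqnSn k) j')) (u (widen_ord (leqnSn k) j')) = 0.
  move=> j'.
  have cinj : injective (fun j => c (widen_ord (leqnSn k) j)).
    by move=> x y /ci /(congr1 val) /= /val_inj.
  have hu' : forall j, Om (u (widen_ord (leqnSn k) j)) =
      zact (c (widen_ord (leqnSn k) j)) (u (widen_ord (leqnSn k) j)).
    by move=> x; rewrite hu.
  have := IH (fun j => a (widen_ord (leqnSn k) j) * (c (widen_ord (leqnSn k) j) - c l))
     (fun j => c (widen_ord (leqnSn k) j)) (fun j => u (widen_ord (leqnSn k) j)) cinj hu' H1 j'.
  rewrite mulrC zactM => Hz; apply: (tf0 tf _ Hz).
  rewrite subr_eq0; apply/eqP => /ci /(congr1 val) /=.
  by move=> hj; move: (ltn_ord j'); rewrite hj ltnn.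
have H3 : zact (a l) (u l) = 0.
  by move: hs; rewrite big_ord_recr /= big1 ?add0r // => i _; exact: H2.
by case: (unliftP l j) => [j' ->|->] //; rewrite lw.
Qed.

End E.

Section E2.
Variable C : numClosedFieldType.
Variable V : lmodType C.
Variable rho : sl2_module V.
Local Notation e := (rho_e rho).
Local Notation f := (rho_f rho).
Local Notation h := (rho_h rho).
Local Notation L0 := (L0 rho).
Local Notation zact := (zact rho).
Local Notation cas := (casimir rho).
Implicit Types (p q : {poly C}) (u v w x : V) (a b c : C).

Ltac hyps := first [exact: linD | exact: linZ | exact: L0D | exact: L0Z
  | exact: eL0 | exact: fL0 | exact: efv].

Lemma casD u w : cas (u + w) = cas u + cas w.
Proof. rewrite !casE; apply: OmD; hyps. Qed.
Lemma casZ a u : cas (a *: u) = a *: cas u.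
Proof. rewrite !casE; apply: OmZ; hyps. Qed.
Lemma casL x : cas (L0 x) = L0 (cas x).
Proof. rewrite !casE; apply: OmL; hyps. Qed.
Lemma casF x : cas (f x) = f (cas x).
Proof. rewrite !casE; apply: OmF; hyps. Qed.
Lemma casEc x : cas (e x) = e (cas x).
Proof. rewrite !casE; apply: OmEc; hyps. Qed.
Lemma casH x : cas (h x) = h (cas x).
Proof. by rewrite !(hL0 rho) -scaleNr casZ casL scaleNr. Qed.
Lemma cas_zact p v : cas (zact p v) = zact p (cas v).
Proof. exact: (zact_comm casD casZ casL). Qed.

Lemma iterfD m u w : iter m f (u + w) = iter m f u + iter m f w.
Proof. by elim: m => //= m ->; rewrite linD. Qed.
Lemma iterfZ m a u : iter m f (a *: u) = a *: iter m f u.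
Proof. by elim: m => //= m ->; rewrite linZ. Qed.

Lemma L0_iterf m v : L0 (iter m f v) = iter m f (L0 v) + m%:R *: iter m f v.
Proof.
elim: m => [|m IH]; first by rewrite scale0r addr0.
rewrite iterS L0f IH linD linZ -addn1 natrD scalerDl scale1r addrA.
by rewrite addn1.
Qed.

Lemma claim_e y : e y = 0 -> forall j, exists b,
  e (iter j.+1 f y) = iter j f ((- (2%:R * (j.+1)%:R)) *: L0 y + b *: y).
Proof.
move=> ey; elim => [|j [b IH]].
  exists 0; rewrite /= efv ey lin0 mulr1 scale0r addr0 scaleNr.
  by rewrite sub0r.
exists (b - 2%:R * (j.+1)%:R).
rewrite iterS efv IH -iterS L0_iterf !iterfD !iterfZ.
rewrite scalerDr scalerA opprD addrACA -!scalerBl.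
congr (_ *: _ + _ *: _).
by rewrite [(j.+2)%:R]mulrSr; ring.
Qed.

Lemma u_nz y : torsion_free rho -> e y = 0 -> y != 0 -> forall j, iter j f y != 0.
Proof.
move=> tf ey y0; elim => [//|j IH]; apply/negP => /eqP H0.
have [b hb] := claim_e ey j.
move: hb; rewrite H0 lin0 => /esym.
rewrite iterfD !iterfZ.
set A := - (2%:R * (j.+1)%:R).
have -> : iter j f (L0 y) = L0 (iter j f y) - j%:R *: iter j f y by rewrite L0_iterf addrK.
move=> H.
have hA : A != 0 by rewrite /A oppr_eq0 mulf_neq0 ?two_neq0 // pnatr_eq0.
have hp : A *: 'X + (b - A * j%:R)%:P != 0.
  apply/eqP => /(congr1 (fun p : {poly C} => p`_1)).
  rewrite coefD coefZ coefX coefC /= mulr1 addr0 coef0 => A0.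
  by move/eqP: hA; apply.
have : zact (A *: 'X + (b - A * j%:R)%:P) (iter j f y) = 0.
  rewrite zactD zactZ zactX zactC -[RHS]H scalerBr scalerA scalerBl.
  by rewrite addrA addrAC.
move/(tf0 tf hp) => /eqP; apply/negP; exact: IH.
Qed.

End E2.

Section E3.
Variable C : numClosedFieldType.
Variable V : lmodType C.
Variable rho : sl2_module V.
Local Notation e := (rho_e rho).
Local Notation f := (rho_f rho).
Local Notation h := (rho_h rho).
Local Notation L0 := (L0 rho).
Local Notation zact := (zact rho).
Local Notation cas := (casimir rho).

Lemma e_inj : purely_irreducible rho -> forall y, e y = 0 -> y = 0.
Proof.
move=> PI y ey; apply/eqP; apply/negPn/negP => y0.
have [_ tf [n [vs HR]] _] := PI.
have [a [[j1 hj1] hs]] := dep HR (fun j : 'I_n.+1 => iter j f y).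
pose c := fun j : nat => ('X - (j%:R)%:P) * ('X - ((j.+1)%:R)%:P) : {poly C}.
have ceig : forall j, cas (iter j f y) = zact (c j) (iter j f y).
  elim => [|j IH].
    rewrite casE /Om ey lin0 addr0 /c zactM !zactB !zactX !zactC.
    by rewrite scale0r subr0 scale1r L0B.
  rewrite iterS casF IH f_zact; congr (zact _ _).
  rewrite /c comp_polyM !comp_polyB comp_polyX !comp_polyC.
  rewrite [(j.+2)%:R]mulrSr [(j.+1)%:R]mulrSr !polyCD polyCN; ring.
have ev : forall m x, (c m).[x] = (x - m%:R) * (x - (m.+1)%:R).
  by move=> m x; rewrite /c hornerM !hornerXsubC.
have cinj : injective (fun j : 'I_n.+1 => c j).
  move=> j k hjk; apply: val_inj => /=.
  have h1 : (c k).[(j : nat)%:R] = 0 by rewrite -hjk ev subrr mul0r.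
  have h2 : (c k).[(j : nat).+1%:R] = 0 by rewrite -hjk ev subrr mulr0.
  move: h1 h2; rewrite !ev => /eqP; rewrite mulf_eq0 !subr_eq0 !eqr_nat => /orP h1.
  move/eqP; rewrite mulf_eq0 !subr_eq0 !eqr_nat => /orP h2.
  by case: h1 => /eqP h1; case: h2 => /eqP h2; lia.
have := @eig_indep _ _ rho cas (@casD _ _ rho) (@cas_zact _ _ rho) tf n.+1 a (fun j : 'I_n.+1 => c j)
  (fun j : 'I_n.+1 => iter j f y) cinj (fun j => ceig j) hs j1.
move/(tf0 tf hj1) => /eqP; apply/negP; exact: u_nz.
Qed.

Theorem main_gen : purely_irreducible rho ->
  casimir_module rho /\
  (forall phi : {linear V -> V}, sl2_endomorphism rho phi ->
     exists c : C, forall v, phi v = c *: v).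
Proof.
move=> PI; split.
  exact: (scalar_main (@casD _ _ rho) (@casZ _ _ rho) (@casEc _ _ rho) (@casF _ _ rho) (@casH _ _ rho) PI (e_inj PI)).
move=> phi hphi.
apply: (scalar_main (linD phi) (linZ phi) _ _ _ PI (e_inj PI)) => v.
- by case: (hphi v).
- by case: (hphi v).
- by case: (hphi v).
Qed.
End E3.


Unset Implicit Arguments.
Local Open Scope complex_scope.

Theorem proposition7p28 (R : realType) (V : lmodType R[i])
    (rho : sl2_module V) :
  purely_irreducible rho ->
  casimir_module rho /\
  (forall phi : {linear V -> V}, sl2_endomorphism rho phi ->
     exists c : R[i], forall v, phi v = c *: v).
Proof. exact: (@main_gen R[i] V rho). Qed.
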